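(* Let $I$ be a quasipolar general ring and $e=e^2\in I$. Then $eIe$ is a quasipolar general ring.
   Context: A general ring is an associative ring not necessarily having an identity; $eIe=\{eae\mid a\in I\}$. For a general ring $K$ and $p,q\in K$, $p*q=p+q-pq$; $Q(K)=\{q\in K\mid p*q=0=q*p\text{ for some }p\in K\}$; $\mathrm{comm}_K(a)=\{x\in K\mid xa=ax\}$, $\mathrm{comm}_K^2(a)=\{x\in K\mid xy=yx\text{ for all }y\in\mathrm{comm}_K(a)\}$; $QN(K)=\{q\in K\mid qx\in Q(K)\text{ for all }x\in\mathrm{comm}_K(q)\}$. An element $a\in K$ is quasipolar in $K$ if there is an idempotent $p\in\mathrm{comm}_K^2(a)$ with $a+p\in Q(K)$ and $a-ap\in QN(K)$; $K$ is a quasipolar general ring if every element of $K$ is quasipolar in $K$. *)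

(* Defs.v *)
(* A general ring (associative, not necessarily unital) is
   modelled as an additive group T : zmodType together with a multiplication
   mul : T -> T -> T that is associative and biadditive.  Subrings such as
   eIe are modelled as predicates S : T -> Prop; all notions below are
   relative to such a subset S (with the operations inherited from T). *)
From HB Require Import structures.
From mathcomp Require Import all_boot all_order all_algebra.
Set Implicit Arguments. Unset Strict Implicit. Unset Printing Implicit Defensive.
Import GRing.Theory.
Local Open Scope ring_scope.

Definition is_genring (T : zmodType) (mul : T -> T -> T) : Prop :=
  [/\ associative mul,
      forall x y z, mul x (y + z) = mul x y + mul x z
    & forall x y z, mul (x + y) z = mul x z + mul y z].

Section GenRing.
Variables (T : zmodType) (mul : T -> T -> T).

Definition circ (p q : T) : T := p + q - mul p q.

Definition Qset (S : T -> Prop) (q : T) : Prop :=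
  S q /\ exists p, S p /\ circ p q = 0 /\ circ q p = 0.

Definition commK (S : T -> Prop) (a x : T) : Prop := S x /\ mul x a = mul a x.

Definition comm2K (S : T -> Prop) (a x : T) : Prop :=
  S x /\ forall y, commK S a y -> mul x y = mul y x.

Definition QNset (S : T -> Prop) (q : T) : Prop :=
  S q /\ forall x, commK S q x -> Qset S (mul q x).

Definition quasipolar_in (S : T -> Prop) (a : T) : Prop :=
  exists p, [/\ comm2K S a p, mul p p = p, Qset S (a + p) & QNset S (a - mul a p)].

Definition quasipolar_genring (S : T -> Prop) : Prop :=
  forall a, S a -> quasipolar_in S a.

Definition corner (e : T) : T -> Prop := fun x => exists a, x = mul (mul e a) e.

End GenRing.

(* Main.v *)
Require Import Defs.
From mathcomp Require Import all_boot all_order all_algebra.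
Import GRing.Theory.
Local Open Scope ring_scope.
Set Implicit Arguments. Unset Strict Implicit.

Section H.
Variables (T : zmodType) (mul : T -> T -> T).
Hypothesis A : associative mul.
Hypothesis Dr : forall x y z, mul x (y + z) = mul x y + mul x z.
Hypothesis Dl : forall x y z, mul (x + y) z = mul x z + mul y z.

Lemma mul0r' x : mul 0 x = 0.
Proof. by apply: (addrI (mul 0 x)); rewrite -Dl !addr0. Qed.
Lemma mulr0' x : mul x 0 = 0.
Proof. by apply: (addrI (mul x 0)); rewrite -Dr !addr0. Qed.
Lemma mulrN' x y : mul x (- y) = - mul x y.
Proof. by apply/eqP; rewrite -addr_eq0 -Dr addNr mulr0'. Qed.
Lemma mulNr' x y : mul (- x) y = - mul x y.
Proof. by apply/eqP; rewrite -addr_eq0 -Dl addNr mul0r'. Qed.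
Lemma mulrB' x y z : mul x (y - z) = mul x y - mul x z.
Proof. by rewrite Dr mulrN'. Qed.
Lemma mulBr' x y z : mul (x - y) z = mul x z - mul y z.
Proof. by rewrite Dl mulNr'. Qed.

Variable e : T.
Hypothesis ee : mul e e = e.

Lemma corner_l x : corner mul e x -> mul e x = x.
Proof. by case=> b ->; rewrite !A ee. Qed.
Lemma corner_r x : corner mul e x -> mul x e = x.
Proof. by case=> b ->; rewrite -!A ee. Qed.

Lemma Qcorner x : Qset mul (fun _ => True) x -> mul e x = mul x e ->
  Qset mul (corner mul e) (mul x e).
Proof.
move=> [_ [p [_ [h1 h2]]]] ex.
have exe : mul e (mul x e) = mul x e by rewrite A ex -A ee.
split; first by exists x; rewrite ex -A ee.
exists (mul (mul e p) e); split; first by exists p.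
move: h1 h2; rewrite /circ => h1 h2.
split.
- have: mul (mul e (p + x - mul p x)) e = 0 by rewrite h1 mulr0' mul0r'.
  rewrite !Dr !mulrN' !Dl !mulNr'.
  have -> : mul (mul e x) e = mul x e by rewrite ex -A ee.
  have -> : mul (mul (mul e p) e) (mul x e) = mul (mul e (mul p x)) e.
    by rewrite -A exe !A.
  by [].
- have: mul (mul e (x + p - mul x p)) e = 0 by rewrite h2 mulr0' mul0r'.
  rewrite !Dr !mulrN' !Dl !mulNr'.
  have -> : mul (mul e x) e = mul x e by rewrite ex -A ee.
  have -> : mul (mul x e) (mul (mul e p) e) = mul (mul e (mul x p)) e.
    by rewrite !A ex -(A x e e) ee.
  by [].
Qed.
End H.

Theorem theorem3p5 (T : zmodType) (mul : T -> T -> T) :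
  is_genring mul ->
  quasipolar_genring mul (fun _ => True) ->
  forall e : T, mul e e = e ->
  quasipolar_genring mul (corner mul e).
Proof.
move=> [A Dr Dl] qp e ee a Ca.
have ea := corner_l A ee Ca; have ae := corner_r A ee Ca.
have [p [[_ c2] pp Qap QNz]] := qp a I.
have pe : mul p e = mul e p by apply: c2; split => //; rewrite ea ae.
exists (mul e p); split.
- split; first by exists p; rewrite -A pe A ee.
  move=> y [Cy ya].
  have py : mul p y = mul y p by apply: c2.
  by rewrite -A py A (corner_l A ee Cy) -{1}(corner_r A ee Cy) -A.
- by rewrite -A (A p e p) pe -A pp A ee.
- have -> : a + mul e p = mul (a + p) e by rewrite Dl ae pe.
  apply: Qcorner => //.
  by rewrite Dr Dl ea ae pe.
- have hz : mul a (mul e p) = mul a p by rewrite A ae.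
  rewrite hz.
  set z := a - mul a p.
  have ez : mul e z = z by rewrite mulrB' // A ea.
  have ze : mul z e = z by rewrite mulBr' // -A pe A ae.
  split; first by exists z; rewrite ez ze.
  move=> x [Cx xz].
  have: Qset mul (fun _ => True) (mul z x) by apply: QNz.2.
  move=> Q.
  have -> : mul z x = mul (mul z x) e by rewrite -A (corner_r A ee Cx).
  apply: Qcorner => //.
  by rewrite A ez -A (corner_r A ee Cx).
Qed.
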